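(* Generalized MES does not satisfy EJR-M: there exists an instance in which the allocation returned by Generalized MES violates EJR-M.
   Context: Model: There is a set of agents $N=\{1,\dots,n\}$. The resource $R$ consists of a cake $C=[0,c]$ for a real $c\ge 0$ and a set of indivisible goods $G=\{g_1,\dots,g_m\}$ for an integer $m\ge 0$, with $\max(c,m)>0$. A piece of cake is a union of finitely many disjoint closed subintervals of $C$; its length $\ell(\cdot)$ is the sum of the lengths of its intervals. A bundle $R'=(C',G')$ consists of a piece of cake $C'\subseteq C$ and a set $G'\subseteq G$; its size is $s(R')=\ell(C')+|G'|$. Each agent $i$ approves a bundle $R_i=(C_i,G_i)$, and her utility for a bundle $R'$ is $u_i(R')=\ell(C_i\cap C')+|G_i\cap G'|$. A parameter $\alpha\in(0,c+m]$ is given; an allocation is a bundle $A$ with $s(A)\le\alpha$. For a real $t>0$, $N^*\subseteq N$ is $t$-cohesive if $|N^*|\ge t n/\alpha$ and $s(\bigcap_{i\in N^*}R_i)\ge t$. EJR-M: an allocation $A$ satisfies EJR-M if for every real $t>0$ and every $t$-cohesive group $N^*$ for which there exists a bundle $R^*\subseteq R$ with $s(R^* )=t$ and $R^*\subseteq R_i$ for all $i\in N^*$, there is $j\in N^*$ with $u_j(A)\ge t$. Generalized MES (Method of Equal Shares): Step 1: set $R'=(C',G')=(\emptyset,\emptyset)$ and budgets $b_i=\alpha/n$ for all $i$; agents still present are ''remaining''. Step 2: divide the remaining cake into intervals $I_1,\dots,I_k$ such that each agent approves each interval entirely or not at all. For an interval $I_j=[x_0,x_1]$, $x\in(x_0,x_1]$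 and $\rho\ge 0$, $I_j$ is $(x,\rho)$-affordable if $\sum_{i\in N_{I_j}}\min(b_i,(x-x_0)\rho)=x-x_0$, where $N_{I_j}$ is the set of remaining agents approving $I_j$. A remaining good $g$ is $\rho$-affordable if $\sum_{i\in N_g}\min(b_i,\rho)=1$, where $N_g$ is the set of remaining agents approving $g$. Step 3: if no $\rho$-affordable good and no $(x,\rho)$-affordable piece of cake exists for any $\rho$, return $R'$. Otherwise take either an interval $I_j$ with the smallest $\rho$ together with the largest $x$ such that $I_j$ is $(x,\rho)$-affordable, or a good $g$ with the smallest $\rho$ such that $g$ is $\rho$-affordable, whichever has smaller $\rho$. In the first case deduct $\min(b_i,(x-x_0)\rho)$ from $b_i$ for each $i\in N_{I_j}$, remove $[x_0,x]$ from the remaining cake and add it to $C'$; in the second case deduct $\min(b_i,\rho)$ from $b_i$ for each $i\in N_g$, remove $g$ from the remaining goods and add it to $G'$. Remove all agents with zero budget and go to Step 2. *)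

(* Defs.v *)
From HB Require Import structures.
From mathcomp Require Import all_boot all_order all_algebra.
From mathcomp Require Import all_classical all_reals all_analysis.
Set Implicit Arguments. Unset Strict Implicit. Unset Printing Implicit Defensive.
Import Order.TTheory GRing.Theory Num.Theory.
Local Open Scope classical_set_scope.
Local Open Scope ring_scope.

Section Model.
Variable R : realType.

Definition citv (a b : R) : set R := [set x | a <= x <= b].
Definition oitv (a b : R) : set R := [set x | a < x < b].

Definition is_piece (c : R) (S : set R) : Prop :=
  exists s : seq (R * R),
    all (fun p => (0 <= p.1) && (p.1 <= p.2) && (p.2 <= c)) s /\
    pairwise (fun p q => (p.2 < q.1) || (q.2 < p.1)) s /\
    S = [set x | exists2 p, p \in s & p.1 <= x <= p.2].

Definition len (S : set R) : R := fine (@lebesgue_measure R S).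

Variables (n m : nat).

(* An instance: cake [0,c], goods 'I_m, agents 'I_n, parameter alpha,
   agent i approves the bundle (Ca i, Ga i). *)
Definition valid_instance (c alpha : R) (Ca : 'I_n -> set R)
    (Ga : 'I_n -> {set 'I_m}) : Prop :=
  (0 < n)%N /\ 0 <= c /\ (0 < c \/ (0 < m)%N) /\
  0 < alpha /\ alpha <= c + m%:R /\ (forall i, is_piece c (Ca i)).

Definition bundle := (set R * {set 'I_m})%type.

Definition size_b (A : bundle) : R := len A.1 + #|A.2|%:R.

Definition util (Ci : set R) (Gi : {set 'I_m}) (A : bundle) : R :=
  len (Ci `&` A.1) + #|Gi :&: A.2|%:R.

Definition EJRM (c alpha : R) (Ca : 'I_n -> set R) (Ga : 'I_n -> {set 'I_m})
    (A : bundle) : Prop :=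
  forall (t : R) (Ns : {set 'I_n}), 0 < t ->
    t * n%:R / alpha <= #|Ns|%:R ->
    t <= size_b ([set x | 0 <= x <= c /\ forall i, i \in Ns -> Ca i x],
                 (\bigcap_(i in Ns) Ga i)%SET) ->
    (exists Rs : bundle, is_piece c Rs.1 /\ size_b Rs = t /\
        forall i, i \in Ns -> Rs.1 `<=` Ca i /\ Rs.2 \subset Ga i) ->
    exists2 j, j \in Ns & t <= util (Ca j) (Ga j) A.

Variables (c alpha : R) (Ca : 'I_n -> set R) (Ga : 'I_n -> {set 'I_m}).

(* state: (allocated cake C', allocated goods G', budgets b).
   The remaining cake is [0,c] minus C', the remaining goods are ~: G',
   the remaining agents are those with b i > 0. *)
Definition mstate := (set R * {set 'I_m} * ('I_n -> R))%type.

Definition mes_init : mstate := (set0, finset.set0, fun _ => alpha / n%:R).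

Definition division (Cp : set R) (D : seq (R * R)) : Prop :=
  all (fun p => (0 <= p.1) && (p.1 < p.2) && (p.2 <= c)) D /\
  pairwise (fun p q => (p.2 <= q.1) || (q.2 <= p.1)) D /\
  (forall p, p \in D -> oitv p.1 p.2 `&` Cp = set0) /\
  (citv 0 c `<=` Cp `|` [set x | exists2 p, p \in D & p.1 <= x <= p.2]) /\
  (forall p i, p \in D -> citv p.1 p.2 `<=` Ca i \/ oitv p.1 p.2 `&` Ca i = set0).

Definition inNI (b : 'I_n -> R) (p : R * R) (i : 'I_n) : bool :=
  (0 < b i) && `[< citv p.1 p.2 `<=` Ca i >].

Definition cake_aff (b : 'I_n -> R) (p : R * R) (x rho : R) : Prop :=
  0 <= rho /\ p.1 < x <= p.2 /\
  \sum_(i | inNI b p i) Num.min (b i) ((x - p.1) * rho) = x - p.1.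

Definition inNg (b : 'I_n -> R) (g : 'I_m) (i : 'I_n) : bool :=
  (0 < b i) && (g \in Ga i).

Definition good_aff (Gp : {set 'I_m}) (b : 'I_n -> R) (g : 'I_m) (rho : R) : Prop :=
  g \notin Gp /\ 0 <= rho /\
  \sum_(i | inNg b g i) Num.min (b i) rho = 1.

Inductive mes_step : mstate -> mstate -> Prop :=
| mes_step_cake Cp Gp b D p x rho :
    division Cp D -> p \in D -> cake_aff b p x rho ->
    (forall q y r, q \in D -> cake_aff b q y r -> rho <= r) ->
    (forall g r, good_aff Gp b g r -> rho <= r) ->
    (forall y, cake_aff b p y rho -> y <= x) ->
    mes_step (Cp, Gp, b)
      (Cp `|` citv p.1 x, Gp,
       fun i => if inNI b p i then b i - Num.min (b i) ((x - p.1) * rho) else b i)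
| mes_step_good Cp Gp b D g rho :
    division Cp D -> good_aff Gp b g rho ->
    (forall q y r, q \in D -> cake_aff b q y r -> rho <= r) ->
    (forall h r, good_aff Gp b h r -> rho <= r) ->
    mes_step (Cp, Gp, b)
      (Cp, g |: Gp,
       fun i => if inNg b g i then b i - Num.min (b i) rho else b i).

Inductive mes_star : mstate -> mstate -> Prop :=
| mes_star_refl s : mes_star s s
| mes_star_step s1 s2 s3 : mes_step s1 s2 -> mes_star s2 s3 -> mes_star s1 s3.

Definition mes_final (s : mstate) : Prop :=
  exists D, division s.1.1 D /\
    (forall q y r, q \in D -> ~ cake_aff s.2 q y r) /\
    (forall g r, ~ good_aff s.1.2 s.2 g r).

(* A is an allocation that Generalized MES may return (under some choice of
   divisions and tie-breaking). *)
Definition mes_outcome (A : bundle) : Prop :=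
  exists s, mes_star mes_init s /\ mes_final s /\ A = (s.1.1, s.1.2).

End Model.

(* Main.v *)
Require Import Defs.
From HB Require Import structures.
From mathcomp Require Import all_boot all_order all_algebra.
From mathcomp Require Import all_classical all_reals all_analysis.
From mathcomp Require Import ring lra.
Import Order.TTheory GRing.Theory Num.Theory.
Local Open Scope classical_set_scope.
Local Open Scope ring_scope.

Section Ex.
Variable R : realType.

Definition cc : R := 1/2.
Definition CA (i : 'I_3) : set R := citv 0 cc.
Definition GA (i : 'I_3) : {set 'I_1} := if (i : nat) == 2%N then finset.set0 else [set: 'I_1]%SET.

Lemma citv_meas (a b : R) : measurable (citv a b).
Proof.
have -> : citv a b = `[a, b]%classic by rewrite set_itvcc.
exact: measurable_itv.
Qed.

Lemma len_le (S : set R) : measurable S -> S `<=` citv 0 cc -> len S <= cc.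
Proof.
move=> mS sS.
have h : (lebesgue_measure S <= lebesgue_measure (citv 0 cc))%E.
  by apply: le_measure => //; rewrite inE //; exact: citv_meas.
have e : lebesgue_measure (citv 0 cc) = cc%:E.
  rewrite /citv -(set_itvcc (0:R) cc) lebesgue_measure_itv /= lte_fin.
  rewrite /cc ifT; last lra.
  by rewrite -EFinD subr0.
rewrite e in h.
have h0 := measure_ge0 (@lebesgue_measure R) S.
rewrite /len; move: h h0; case: (lebesgue_measure S) => [r| |] //=.
by move=> _ _; rewrite /cc; lra.
Qed.

Lemma sum3 (P : pred 'I_3) (F : 'I_3 -> R) :
  \sum_(i | P i) F i = (if P ord0 then F ord0 else 0) +
     (if P (lift ord0 ord0) then F (lift ord0 ord0) else 0) +
     (if P (lift ord0 (lift ord0 ord0)) then F (lift ord0 (lift ord0 ord0)) else 0).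
Proof. by rewrite big_mkcond /= !big_ord_recl big_ord0 addr0 addrA. Qed.


Lemma min_le_r (a z : R) : Num.min a z <= z.
Proof. by rewrite ge_min lexx orbT. Qed.
Lemma min_le_l (a z : R) : Num.min a z <= a.
Proof. by rewrite ge_min lexx. Qed.

Lemma cake_rho (b : 'I_3 -> R) p x r : cake_aff CA b p x r -> 1/3 <= r.
Proof.
case=> r0 [/andP [px xp] hs].
set z := (x - p.1) * r in hs.
have z0 : 0 <= z by rewrite /z mulr_ge0 // subr_ge0 ltW.
have hT (P : bool) (a : R) : (if P then Num.min a z else 0) <= z.
  by case: P => //; apply: min_le_r.
rewrite sum3 in hs.
have h1 := hT (inNI CA b p ord0) (b ord0).
have h2 := hT (inNI CA b p (lift ord0 ord0)) (b (lift ord0 ord0)).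
have h3 := hT (inNI CA b p (lift ord0 (lift ord0 ord0))) (b (lift ord0 (lift ord0 ord0))).
have : x - p.1 <= 3 * z.
  move: h1 h2 h3 hs; set A1 := (if _ then _ else _); set A2 := (if _ then _ else _); set A3 := (if _ then _ else _); lra.
rewrite /z => h. have d0 : 0 < x - p.1 by rewrite subr_gt0.
nra.
Qed.

Lemma good_rho (Gp : {set 'I_1}) (b : 'I_3 -> R) g r : good_aff GA Gp b g r -> 1/3 <= r.
Proof.
case=> _ [r0 hs].
have hT (P : bool) (a : R) : (if P then Num.min a r else 0) <= r.
  by case: P => //; apply: min_le_r.
rewrite sum3 in hs.
have h1 := hT (inNg GA b g ord0) (b ord0).
have h2 := hT (inNg GA b g (lift ord0 ord0)) (b (lift ord0 ord0)).
have h3 := hT (inNg GA b g (lift ord0 (lift ord0 ord0))) (b (lift ord0 (lift ord0 ord0))).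
move: h1 h2 h3 hs; set A1 := (if _ then _ else _); set A2 := (if _ then _ else _); set A3 := (if _ then _ else _); lra.
Qed.

Definition Inv1 (s : mstate R 3 1) : Prop :=
  s.1.2 = finset.set0 /\ measurable s.1.1 /\ (s.1.1 `<=` citv 0 cc) /\
  (forall i, 0 <= s.2 i <= 1/2) /\ s.2 ord0 + s.2 (lift ord0 ord0) < 1.

Definition binit : 'I_3 -> R := fun _ => (3/2 : R) / 3%:R.
Lemma binitE i : binit i = 1/2.
Proof. by rewrite /binit; field. Qed.

Definition init : mstate R 3 1 := mes_init 3 1 (3/2 : R).

Lemma no_good s g r : Inv1 s -> ~ good_aff GA s.1.2 s.2 g r.
Proof.
case=> _ [_ [_ [hb hs]]] [_ [r0 hsum]].
rewrite sum3 in hsum.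
have hT i : (if inNg GA s.2 g i then Num.min (s.2 i) r else 0) <= s.2 i.
  case: (inNg _ _ _ _) => //; first exact: min_le_l.
  by case/andP: (hb i).
have h3 : inNg GA s.2 g (lift ord0 (lift ord0 ord0)) = false.
  by rewrite /inNg /GA /= inE andbF.
rewrite h3 in hsum.
have := hT ord0; have := hT (lift ord0 ord0).
move: hsum; set A1 := (if _ then _ else _); set A2 := (if _ then _ else _); lra.
Qed.

Lemma sub_citv i a b : 0 <= a -> b <= cc -> `[< citv a b `<=` CA i >] = true.
Proof.
move=> a0 bc; apply/asboolP => y /andP [ay yb]; rewrite /CA /citv /=.
apply/andP; split; [exact: le_trans ay | exact: le_trans bc].
Qed.

Lemma init_aff (p : R * R) : 0 <= p.1 -> p.1 < p.2 -> p.2 <= cc ->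
  cake_aff CA binit p p.2 (1/3).
Proof.
move=> h1 h2 h3; split; first lra.
split; first by rewrite h2 lexx.
have hI i : inNI CA binit p i = true.
  by rewrite /inNI binitE sub_citv // andbT; lra.
rewrite sum3 !hI !binitE.
rewrite min_r; last by rewrite /cc in h3; lra.
lra.
Qed.

Lemma init_cake D : division cc CA set0 D ->
  exists2 p, p \in D & cake_aff CA binit p p.2 (1/3).
Proof.
case=> hall [_ [_ [hcov _]]].
have : citv 0 cc 0 by rewrite /citv /cc /=; apply/andP; split; lra.
case/hcov => // -[p pD] _.
exists p => //.
by case/andP: (allP hall p pD) => /andP [h1 h2] h3; apply: init_aff.
Qed.


Lemma nb_bounds (b : 'I_3 -> R) p x rho i : 0 <= b i -> p.1 < x -> 0 <= rho ->
  let nb := if inNI CA b p i then b i - Num.min (b i) ((x - p.1) * rho) else b i in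
  0 <= nb <= b i.
Proof.
move=> b0 px r0 /=.
case hI: (inNI CA b p i); last by rewrite lexx b0.
have z0 : 0 <= (x - p.1) * rho by rewrite mulr_ge0 // subr_ge0 ltW.
have m0 : 0 <= Num.min (b i) ((x - p.1) * rho) by rewrite le_min b0 z0.
have := min_le_l (b i) ((x - p.1) * rho).
move: m0; set M := Num.min _ _ => m0 m1.
apply/andP; split; lra.
Qed.

Lemma step_inv s s' : (Inv1 s \/ s = init) -> mes_step cc CA GA s s' -> Inv1 s'.
Proof.
move=> hI hs; case: hs hI => [Cp Gp b D p x rho hD hp hca hmin hgmin hx
                             | Cp Gp b D g rho hD hga hmin hgmin] hI.
- have hr : 1/3 <= rho := cake_rho _ _ _ _ hca.
  case: hca => r0 [/andP [px xp] _].
  case/andP: (allP (proj1 hD) p hp) => /andP [p10 p12] p2c.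
  have sub1 : (citv p.1 x `<=` citv 0 cc)%classic.
    move=> y /andP [y1 y2] /=; apply/andP; split; [exact: le_trans y1|].
    exact: le_trans (le_trans xp p2c).
  case: hI => [[/= -> [mC [sC [hb hsum]]]] | hI].
  + split=> //=; split; first by apply: measurableU => //; exact: citv_meas.
    split; first by move=> y [/sC|/sub1].
    have hB i := nb_bounds b p x rho i (proj1 (andP (hb i))) px r0.
    split.
      move=> i; have /andP [h1 h2] := hB i; have /andP [_ h3] := hb i.
      by apply/andP; split => //; exact: le_trans h3.
    have /andP [_ h1] := hB ord0; have /andP [_ h2] := hB (lift ord0 ord0).
    move: h1 h2 hsum; set A1 := (if _ then _ else _); set A2 := (if _ then _ else _); lra.
  + case: hI => -> -> -> /=.
    split=> //; split; first by apply: measurableU => //; exact: citv_meas.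
    split; first by move=> y [//|/sub1].
    have e : (3/2/3%:R : R) = 1/2 by field.
    rewrite /= !e.
    have hIn i : inNI CA (fun=> 1/2) p i = true.
      by rewrite /inNI sub_citv // andbT; lra.
    have hlt : Num.min (1/2 : R) ((x - p.1) * rho) > 0.
      rewrite lt_min; apply/andP; split; first lra.
      by apply: mulr_gt0; [rewrite subr_gt0 | lra].
    have hle := min_le_l (1/2 : R) ((x - p.1) * rho).
    rewrite !hIn.
    move: hlt hle; set M := Num.min _ _ => h1 h2.
    split; last lra.
    move=> i; rewrite hIn; apply/andP; split; lra.
- case: hI => [hI | hI].
  + by case: (no_good _ _ _ hI hga).
  + move: hI hD hga hmin => [-> -> ->] hD hga hmin.
    have [q qD hq] := init_cake _ hD.
    have hr := hmin _ _ _ qD hq.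
    case: hga => _ [r0 hsum].
    rewrite sum3 in hsum.
    have hT (P : bool) (a : R) : (if P then Num.min a rho else 0) <= rho.
      by case: P => //; exact: min_le_r.
    have h3 bb : inNg GA bb g (lift ord0 (lift ord0 ord0)) = false.
      by rewrite /inNg /GA /= inE andbF.
    rewrite h3 in hsum.
    exfalso; move: hsum.
    case: (inNg _ _ g ord0); case: (inNg _ _ g (lift ord0 ord0));
    have := min_le_r (3/2/3%:R : R) rho; move: (Num.min _ _) => M; lra.
Qed.


Lemma reach s1 s2 : mes_star cc CA GA s1 s2 -> (Inv1 s1 \/ s1 = init) -> (Inv1 s2 \/ s2 = init).
Proof.
elim=> // a b c hab _ IH hI; apply: IH; left; exact: step_inv hI hab.
Qed.

Lemma init_not_final : ~ mes_final cc CA GA init.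
Proof.
case=> D [hD [hc _]].
have [q qD hq] := init_cake _ hD.
exact: (hc _ _ _ qD hq).
Qed.

End Ex.

Theorem mainTheorem6 (R : realType) :
  exists (n m : nat) (c alpha : R) (Ca : 'I_n -> set R) (Ga : 'I_n -> {set 'I_m}),
    valid_instance c alpha Ca Ga /\
    (exists A, mes_outcome c alpha Ca Ga A) /\
    (forall A, mes_outcome c alpha Ca Ga A -> ~ EJRM c alpha Ca Ga A).
Proof.
exists 3%N, 1%N, (cc R), (3/2 : R), (@CA R), GA.
split.
  split=> //; rewrite /cc; split; first lra.
  split; first by left; lra.
  split; first lra. split; first lra.
  move=> i; exists [:: (0, 1/2)]; split.
    by rewrite /= andbT; apply/andP; split => //; apply/andP; split; lra.
  split => //.
  apply/seteqP; split => x /=.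
    by move=> hx; exists (0, 1/2) => //; rewrite mem_head.
  by case=> p; rewrite inE => /eqP ->.
split.
  pose b0 := fun _ : 'I_3 => (3/2 : R) / 3%:R.
  have hD : division (cc R) (CA R) set0 [:: (0, cc R)].
    split; first by rewrite /= andbT /cc; apply/andP; split => //; apply/andP; split; lra.
    split => //.
    split; first by move=> p; rewrite inE => /eqP -> /=; exact: setI0.
    split; first by move=> x hx; right; exists (0, cc R) => //; rewrite mem_head.
    by move=> p i; rewrite inE => /eqP ->; left.
  have hc : ((0:R), cc R).1 < ((0:R), cc R).2 by rewrite /= /cc divr_gt0.
  have hst := @mes_step_cake R 3 1 (cc R) (CA R) GA set0 finset.set0 b0 [:: (0, cc R)]
     (0, cc R) (cc R) (1/3) hD (mem_head _ _) (@init_aff R (0, cc R) (lexx _) hc (lexx _))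
     (fun q y r _ h => @cake_rho R _ _ _ _ h) (fun g r h => @good_rho R _ _ _ _ h)
     (fun y h => proj2 (andP (proj1 (proj2 h)))).
  eexists; exists (set0 `|` citv 0 (cc R), finset.set0,
       fun i => if inNI (CA R) b0 (0, cc R) i
                then b0 i - Num.min (b0 i) ((cc R - (0, cc R).1) * (1/3)) else b0 i).
  split.
    apply: (mes_star_step hst); exact: mes_star_refl.
  split; last reflexivity.
  exists [::]; split.
    split => //; split => //; split => //; split => //.
    by move=> x hx; left; right.
  split => // g r.
  apply: (@no_good R).
  apply: (@step_inv R _ _ (or_intror erefl)).
  exact: hst.
move=> A [s [hs [hf ->]]] hE.
case: (@reach R _ _ hs (or_intror erefl)) => [hI | hI]; last first.
  by apply: (@init_not_final R); rewrite -hI.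
case: hI => hG [mC [sC _]].
pose Ns : {set 'I_3} := [set ord0; lift ord0 ord0]%SET.
have hN : #|Ns| = 2%N by rewrite cards2.
have h1 : 1 * 3%:R / (3/2) <= #|Ns|%:R :> R by rewrite hN; lra.
have hGi i : i \in Ns -> GA i = [set: 'I_1]%SET.
  by rewrite !inE => /orP [] /eqP ->.
have hcap : (\bigcap_(i in Ns) GA i)%SET = [set: 'I_1]%SET.
  by rewrite (eq_bigr (fun _ => [set: 'I_1]%SET)) // big1.
have hlen0 (S : set R) : 0 <= len S by apply: fine_ge0; exact: measure_ge0.
have hlenset0 : len (set0 : set R) = 0 by rewrite /len measure0.
have h2 := hE 1 Ns ltr01 h1.
have h3 : 1 <= size_b ([set x | 0 <= x <= cc R /\ (forall i : 'I_3, i \in Ns -> CA R i x)],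
       (\bigcap_(i in Ns) GA i)%SET).
  rewrite /size_b /= hcap cardsT card_ord.
  have := hlen0 [set x | 0 <= x <= cc R /\ (forall i : 'I_3, i \in Ns -> CA R i x)].
  lra.
have h4 : exists Rs : bundle R 1,
       is_piece (cc R) Rs.1 /\ size_b Rs = 1 /\
       (forall i : 'I_3, i \in Ns -> Rs.1 `<=` CA R i /\ Rs.2 \subset GA i).
  exists (set0, [set: 'I_1]%SET); split.
    exists [::]; split => //; split => //.
    by apply/seteqP; split => x //= [p].
  split; first by rewrite /size_b /= hlenset0 cardsT card_ord add0r.
  by move=> i hi; split => //=; rewrite hGi.
have [j jN hj] := h2 h3 h4.
move: hj; rewrite /util /= hG finset.setI0 cards0 addr0.
have : len (CA R j `&` s.1.1) <= cc R.
  apply: len_le; first by apply: measurableI => //; exact: citv_meas.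
  by move=> y [_ /sC].
rewrite /cc; lra.
Qed.
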